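(* Let $L$ be a semiprime right Leibniz algebra over a field $\mathbb{F}$. Let $\mathscr{D}=\{(\delta,I): I\in\mathscr{J}_e(L),\ \delta\in\mathrm{PDer}(I,L)\}$ with the equivalence relation $(\delta,I)\equiv(\mu,J)$ iff there exists $K\in\mathscr{J}_e(L)$ with $K\subseteq I\cap J$ and $\delta|_K=\mu|_K$; let $Q=Q(L)=\mathscr{D}/\equiv$ and denote by $\delta_I$ the class of $(\delta,I)$. Define $p\cdot\delta_I=(p\delta)_I$ where $(p\delta)(y)=\delta(py)$; $\delta_I+\mu_J=(\delta+\mu)_{I\cap J}$ where $(\delta+\mu)(x)=\delta(x)+\mu(x)$ for $x\in I\cap J$; and $[\delta_I,\mu_J]=[\delta,\mu]_{(I\cap J)^2}$ where $[\delta,\mu]:(I\cap J)^2\to L$, $x\mapsto \mu\delta(x)-\delta\mu(x)$. Then $Q$ with these operations is a Leibniz algebra containing $L$ as a subalgebra via the monomorphism $\varphi:L\to Q$, $x\mapsto (R_x)_L$, where $R_x(y)=[y,x]$.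
   Context: A right Leibniz algebra satisfies $[x,[y,z]]=[[x,y],z]-[[x,z],y]$. An ideal $I$ is a subspace with $[I,L]\subseteq I$, $[L,I]\subseteq I$; $I^2=[I,I]$ is the span of $[x,y]$, $x,y\in I$. $L$ is semiprime if $[I,I]\neq\{0\}$ for every nonzero ideal $I$. An ideal $I$ is essential if $I\cap J\neq\{0\}$ for every nonzero ideal $J$; $\mathscr{J}_e(L)$ is the set of essential ideals of $L$. For an ideal $I$, $\mathrm{PDer}(I,L)$ is the set of partial derivations, i.e. linear maps $\delta:I\to L$ with $\delta([x,y])=[\delta(x),y]+[x,\delta(y)]$ for all $x,y\in I$. *)

(* Defs.v *)
From mathcomp Require Import all_boot all_algebra.
Set Implicit Arguments. Unset Strict Implicit. Unset Printing Implicit Defensive.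
Import GRing.Theory.
Local Open Scope ring_scope.

Section LeibnizDefs.
Variables (F : fieldType) (L : lmodType F) (br : L -> L -> L).

Definition bilinear_bracket : Prop :=
  (forall (a : F) (x y z : L), br (a *: x + y) z = a *: br x z + br y z) /\
  (forall (a : F) (x y z : L), br z (a *: x + y) = a *: br z x + br z y).

Definition right_leibniz_identity : Prop :=
  forall x y z : L, br x (br y z) = br (br x y) z - br (br x z) y.

Definition right_leibniz_algebra : Prop :=
  bilinear_bracket /\ right_leibniz_identity.

Definition is_subspace (I : L -> Prop) : Prop :=
  I 0 /\ forall (a : F) (x y : L), I x -> I y -> I (a *: x + y).

Definition is_ideal (I : L -> Prop) : Prop :=
  [/\ is_subspace I,
      (forall x y, I x -> I (br x y)) &
      (forall x y, I y -> I (br x y))].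

Definition nonzero_set (I : L -> Prop) : Prop := exists x, I x /\ x <> 0.

Definition sq (I : L -> Prop) : L -> Prop := fun z =>
  exists (n : nat) (c : 'I_n -> F) (u v : 'I_n -> L),
    (forall i, I (u i) /\ I (v i)) /\ z = \sum_(i < n) c i *: br (u i) (v i).

Definition semiprime : Prop :=
  forall I, is_ideal I -> nonzero_set I -> nonzero_set (sq I).

Definition cap (I J : L -> Prop) : L -> Prop := fun x => I x /\ J x.

Definition essential (I : L -> Prop) : Prop :=
  is_ideal I /\
  forall J, is_ideal J -> nonzero_set J -> nonzero_set (cap I J).

(** partial derivation δ : I -> L, represented by a function L -> L whose
    values outside I are irrelevant *)
Definition is_pder (I : L -> Prop) (d : L -> L) : Prop :=
  (forall (a : F) x y, I x -> I y -> d (a *: x + y) = a *: d x + d y) /\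
  (forall x y, I x -> I y -> d (br x y) = br (d x) y + br x (d y)).

Definition pairT := ((L -> L) * (L -> Prop))%type.

Definition inD (p : pairT) : Prop := essential p.2 /\ is_pder p.2 p.1.

Definition Dequiv (p q : pairT) : Prop :=
  exists K, essential K /\ (forall x, K x -> p.2 x /\ q.2 x) /\
            (forall x, K x -> p.1 x = q.1 x).

Definition Dscale (a : F) (p : pairT) : pairT := (fun y => p.1 (a *: y), p.2).
Definition Dadd (p q : pairT) : pairT := (fun x => p.1 x + q.1 x, cap p.2 q.2).
Definition Dbr (p q : pairT) : pairT :=
  (fun x => q.1 (p.1 x) - p.1 (q.1 x), sq (cap p.2 q.2)).
Definition Dzero : pairT := (fun _ => 0, fun _ => True).

Definition Rmul (x : L) : L -> L := fun y => br y x.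
Definition phi (x : L) : pairT := (Rmul x, fun _ => True).

End LeibnizDefs.

(** A (right) Leibniz algebra presented as a quotient: carrier [P] on [T],
    equivalence [E], zero [z], operations [add], [scl], [brk]. *)
Section QuotientAlgebra.
Variables (F : fieldType) (T : Type) (P : T -> Prop) (E : T -> T -> Prop)
  (z : T) (add : T -> T -> T) (scl : F -> T -> T) (brk : T -> T -> T).

Definition equivalence_on : Prop :=
  [/\ (forall q, P q -> E q q),
      (forall q r, P q -> P r -> E q r -> E r q) &
      (forall q r s, P q -> P r -> P s -> E q r -> E r s -> E q s)].

Definition closed_ops : Prop :=
  [/\ P z,
      (forall q r, P q -> P r -> P (add q r)),
      (forall a q, P q -> P (scl a q)) &
      (forall q r, P q -> P r -> P (brk q r))].

Definition compatible_ops : Prop :=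
  [/\ (forall q q' r r', P q -> P q' -> P r -> P r' ->
         E q q' -> E r r' -> E (add q r) (add q' r')),
      (forall a q q', P q -> P q' -> E q q' -> E (scl a q) (scl a q')) &
      (forall q q' r r', P q -> P q' -> P r -> P r' ->
         E q q' -> E r r' -> E (brk q r) (brk q' r'))].

Definition vector_space_axioms : Prop :=
  [/\ (forall q r s, P q -> P r -> P s -> E (add q (add r s)) (add (add q r) s)),
      (forall q r, P q -> P r -> E (add q r) (add r q)),
      (forall q, P q -> E (add z q) q) &
      (forall q, P q -> exists r, P r /\ E (add q r) z)] /\
  [/\ (forall (a b : F) q, P q -> E (scl a (scl b q)) (scl (a * b) q)),
      (forall q, P q -> E (scl 1 q) q),
      (forall (a : F) q r, P q -> P r -> E (scl a (add q r)) (add (scl a q) (scl a r))) &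
      (forall (a b : F) q, P q -> E (scl (a + b) q) (add (scl a q) (scl b q)))].

Definition bracket_axioms : Prop :=
  [/\ (forall (a : F) q r s, P q -> P r -> P s ->
         E (brk (add (scl a q) r) s) (add (scl a (brk q s)) (brk r s))),
      (forall (a : F) q r s, P q -> P r -> P s ->
         E (brk s (add (scl a q) r)) (add (scl a (brk s q)) (brk s r))) &
      (forall q r s, P q -> P r -> P s ->
         E (brk q (brk r s))
           (add (brk (brk q r) s) (scl (-1) (brk (brk q s) r))))].

Definition quotient_right_leibniz_algebra : Prop :=
  [/\ equivalence_on, closed_ops, compatible_ops, vector_space_axioms
    & bracket_axioms].

Definition quotient_monomorphism (L : lmodType F) (br : L -> L -> L)
  (f : L -> T) : Prop :=
  [/\ (forall x, P (f x)),
      (forall (a : F) x y, E (f (a *: x + y)) (add (scl a (f x)) (f y))),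
      (forall x y, E (f (br x y)) (brk (f x) (f y))) &
      (forall x y, E (f x) (f y) -> x = y)].

End QuotientAlgebra.

(* Main.v *)
Require Import Defs.
From mathcomp Require Import all_boot all_algebra.
Set Implicit Arguments. Unset Strict Implicit. Unset Printing Implicit Defensive.
Import GRing.Theory.
Local Open Scope ring_scope.

Section Aux.
Variables (F : fieldType) (L : lmodType F).
Implicit Types (P : L -> Prop).

Definition linon (P : L -> Prop) (d : L -> L) :=
  forall a x y, P x -> P y -> d (a *: x + y) = a *: d x + d y.

Lemma linon0 P d : P 0 -> linon P d -> d 0 = 0.
Proof.
move=> h0 hd; have := hd 1 0 0 h0 h0; rewrite !scale1r !addr0 => /eqP.
by rewrite -subr_eq0 opprD addrA subrr sub0r oppr_eq0 => /eqP.
Qed.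

Lemma linonZ P d : P 0 -> linon P d -> forall a x, P x -> d (a *: x) = a *: d x.
Proof. by move=> h0 hd a x hx; have := hd a x 0 hx h0; rewrite !addr0 (linon0 h0 hd) addr0. Qed.

Lemma linonD P d : linon P d -> forall x y, P x -> P y -> d (x + y) = d x + d y.
Proof. by move=> hd x y hx hy; have := hd 1 x y hx hy; rewrite !scale1r. Qed.

Lemma linonN P d : P 0 -> linon P d -> forall x, P x -> d (- x) = - d x.
Proof. by move=> h0 hd x hx; rewrite -scaleN1r (linonZ h0 hd) // scaleN1r. Qed.

Lemma linonB P d : is_subspace P -> linon P d -> forall x y, P x -> P y -> d (x - y) = d x - d y.
Proof.
move=> [h0 hs] hd x y hx hy.
have hny : P (- y) by rewrite -[- y]addr0 -scaleN1r; apply: hs.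
by rewrite (linonD hd) // (linonN h0 hd).
Qed.

Lemma subD P : is_subspace P -> forall x y, P x -> P y -> P (x + y).
Proof. by move=> [_ hs] x y hx hy; rewrite -[x]scale1r; apply: hs. Qed.
Lemma subZ P : is_subspace P -> forall a x, P x -> P (a *: x).
Proof. by move=> [h0 hs] a x hx; rewrite -[_ *: _]addr0; apply: hs. Qed.
Lemma subN P : is_subspace P -> forall x, P x -> P (- x).
Proof. by move=> hP x hx; rewrite -scaleN1r; apply: subZ. Qed.
Lemma subB P : is_subspace P -> forall x y, P x -> P y -> P (x - y).
Proof. by move=> hP x y hx hy; apply: subD => //; apply: subN. Qed.

Lemma sum_lin n P (hP : is_subspace P) d (hd : linon P d) (c : 'I_n -> F) (f : 'I_n -> L) :
  (forall i, P (f i)) ->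
  P (\sum_(i < n) c i *: f i) /\ d (\sum_(i < n) c i *: f i) = \sum_(i < n) c i *: d (f i).
Proof.
elim: n c f => [|n IH] c f hf.
  by rewrite !big_ord0; split; [exact: hP.1 | exact: (linon0 hP.1 hd)].
move: (IH (fun i => c (widen_ord (leqnSn n) i)) (fun i => f (widen_ord (leqnSn n) i)) (fun i => hf _)) => /= [h1 h2].
rewrite !big_ord_recr /= [X in P X]addrC [X in d X]addrC.
split; first by apply: hP.2.
by rewrite hd // h2 addrC.
Qed.

Lemma sum_in n P (hP : is_subspace P) (c : 'I_n -> F) (f : 'I_n -> L) :
  (forall i, P (f i)) -> P (\sum_(i < n) c i *: f i).
Proof. by move=> hf; have [] := sum_lin hP (d := id) (fun _ _ _ _ _ => erefl) c hf. Qed.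

Lemma subT : is_subspace (fun _ : L => True).
Proof. by []. Qed.

End Aux.
Lemma split_l m n (i : 'I_m) : split (lshift n i) = inl i.
Proof. exact: (unsplitK (inl _)). Qed.
Lemma split_r m n (i : 'I_n) : split (rshift m i) = inr i.
Proof. exact: (unsplitK (inr _)). Qed.

Section Br.
Variables (F : fieldType) (L : lmodType F) (br : L -> L -> L).
Hypotheses (hb : bilinear_bracket br) (hl : right_leibniz_identity br).
Implicit Types (P I J K N M : L -> Prop).

Lemma brl w : linon (fun _ => True) (fun x => br x w).
Proof. by move=> a x y _ _; rewrite hb.1. Qed.
Lemma brr w : linon (fun _ => True) (br w).
Proof. by move=> a x y _ _; rewrite hb.2. Qed.

Lemma br0l y : br 0 y = 0. Proof. exact: (linon0 (P := fun _ => True) _ (brl y)). Qed.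
Lemma br0r y : br y 0 = 0. Proof. exact: (linon0 (P := fun _ => True) _ (brr y)). Qed.
Lemma brZl a x y : br (a *: x) y = a *: br x y. Proof. exact: (linonZ (P := fun _ => True) _ (brl y)). Qed.
Lemma brZr a x y : br y (a *: x) = a *: br y x. Proof. exact: (linonZ (P := fun _ => True) _ (brr y)). Qed.
Lemma brDl x z y : br (x + z) y = br x y + br z y. Proof. exact: (linonD (P := fun _ => True) (brl y)). Qed.
Lemma brDr x z y : br y (x + z) = br y x + br y z. Proof. exact: (linonD (P := fun _ => True) (brr y)). Qed.
Lemma brBl x z y : br (x - z) y = br x y - br z y. Proof. exact: (linonB (P := fun _ => True) (@subT _ L) (brl y) I I). Qed.
Lemma brBr x z y : br y (x - z) = br y x - br y z. Proof. exact: (linonB (P := fun _ => True) (@subT _ L) (brr y) I I). Qed.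

Lemma sq_subspace N : is_subspace (sq br N).
Proof.
split.
  exists 0%N, (fun _ => 0), (fun _ => 0), (fun _ => 0); split; [by case | by rewrite big_ord0].
move=> a x y [n1 [c1 [u1 [v1 [h1 ->]]]]] [n2 [c2 [u2 [v2 [h2 ->]]]]].
pose g (T : Type) (f1 : 'I_n1 -> T) (f2 : 'I_n2 -> T) (i : 'I_(n1+n2)) :=
  match split i with inl j => f1 j | inr j => f2 j end.
exists (n1 + n2)%N, (g _ (fun j => a * c1 j) c2), (g _ u1 u2), (g _ v1 v2); split.
  by move=> i; rewrite /g; case: (split i) => j; [exact: h1 | exact: h2].
rewrite big_split_ord /= /g; congr (_ + _).
  by rewrite scaler_sumr; apply: eq_bigr => i _; rewrite split_l scalerA.
by apply: eq_bigr => i _; rewrite split_r.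
Qed.

Lemma sq_br N u v : N u -> N v -> sq br N (br u v).
Proof.
move=> hu hv; exists 1%N, (fun _ => 1), (fun _ => u), (fun _ => v); split => //.
by rewrite big_ord1 scale1r.
Qed.

Lemma sq_mono N M : (forall x, N x -> M x) -> forall x, sq br N x -> sq br M x.
Proof.
move=> hNM x [n [c [u [v [h ->]]]]]; exists n, c, u, v; split => // i.
by have [] := h i; split; apply: hNM.
Qed.

Lemma sq_le N : is_ideal br N -> forall x, sq br N x -> N x.
Proof.
move=> [hs hl1 hr1] x [n [c [u [v [h ->]]]]].
by apply: sum_in => // i; have [hu _] := h i; apply: hl1.
Qed.

Lemma sq_ideal N : is_ideal br N -> is_ideal br (sq br N).
Proof.
move=> hN; have hS := sq_subspace N; have [hs hl1 hr1] := hN.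
split => //.
  move=> x y [n [c [u [v [h ->]]]]].
  rewrite (sum_lin (@subT _ L) (brl y) c (f := fun i => br (u i) (v i)) (fun _ => I)).2.
  apply: sum_in => // i; have [hu hv] := h i.
  have -> : br (br (u i) (v i)) y = br (u i) (br (v i) y) + br (br (u i) y) (v i).
    by rewrite hl subrK.
  by apply: subD => //; apply: sq_br => //; by [apply: hr1 | apply: hl1].
move=> x y [n [c [u [v [h ->]]]]].
rewrite (sum_lin (@subT _ L) (brr x) c (f := fun i => br (u i) (v i)) (fun _ => I)).2.
apply: sum_in => // i; have [hu hv] := h i.
by rewrite hl; apply: subB => //; apply: sq_br => //; apply: hr1.
Qed.

Lemma cap_ideal I J : is_ideal br I -> is_ideal br J -> is_ideal br (cap I J).
Proof.
move=> [[h0 hs] hl1 hr1] [[k0 ks] kl kr]; split; first split.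
- by split.
- by move=> a x y [] ? ? [] ? ?; split; [apply: hs | apply: ks].
- by move=> x y [] ? ?; split; [apply: hl1 | apply: kl].
- by move=> x y [] ? ?; split; [apply: hr1 | apply: kr].
Qed.

Lemma cap_ess I J : essential br I -> essential br J -> essential br (cap I J).
Proof.
move=> [hI eI] [hJ eJ]; split; first exact: cap_ideal.
move=> K hK nK; have [x [[hx1 [hx2 hx3]] hx0]] := eI _ (cap_ideal hJ hK) (eJ _ hK nK).
by exists x.
Qed.

Lemma ess_T : essential br (fun _ => True).
Proof.
split; first by split.
by move=> J _ [x [hx hx0]]; exists x.
Qed.

Lemma sq_ess N : semiprime br -> essential br N -> essential br (sq br N).
Proof.
move=> hsp [hN eN]; split; first exact: sq_ideal.
move=> J hJ nJ; have hc := cap_ideal hN hJ.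
have [x [hx hx0]] := hsp _ hc (eN _ hJ nJ).
exists x; split => //; split; first by apply: sq_mono hx => y [].

by have [] := sq_le hc hx.
Qed.

Lemma pder0 I d : is_subspace I -> is_pder br I d -> d 0 = 0.
Proof. by move=> hI hd; apply: (linon0 hI.1 hd.1). Qed.

Lemma der_sq I N d : is_subspace I -> is_pder br I d -> is_ideal br N ->
  (forall x, N x -> I x) -> forall x, sq br N x -> N (d x).
Proof.
move=> hI [hd1 hd2] hN hNI x [n [c [u [v [h ->]]]]].
have [hs hl1 hr1] := hN.
have hf : forall i, I (br (u i) (v i)).
  by move=> i; have [hu hv] := h i; apply: hNI; apply: hl1.
rewrite (sum_lin hI hd1 c hf).2.
apply: sum_in => // i; have [hu hv] := h i.
rewrite hd2; try by apply: hNI.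
by apply: subD => //; [apply: hr1 | apply: hl1].
Qed.

Lemma ann K w : semiprime br -> essential br K -> (forall z, K z -> br z w = 0) -> w = 0.
Proof.
move=> hsp [hK eK] hw.
pose A := fun w' => forall z, K z -> br z w' = 0.
have [[k0 ks] kl kr] := hK.
have hA : is_ideal br A.
  split; first split.
  - by move=> z _; rewrite br0r.
  - by move=> a x y hx hy z hz; rewrite hb.2 hx // hy // scaler0 addr0.
  - by move=> x y hx z hz; rewrite hl (hx _ hz) br0l (hx _ (kl _ _ hz)) subrr.
  - by move=> x y hy z hz; rewrite hl (hy _ (kl _ _ hz)) (hy _ hz) br0l subrr.
case: (eqVneq w 0) => // hw0.
have [x [hx hx0]] := hsp _ (cap_ideal hK hA) (eK _ hA (ex_intro _ w (conj hw (fun e => negP hw0 (introT eqP e))))).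
exfalso; apply: hx0; move: hx => [n [c [u [v [h ->]]]]].
by apply: big1 => i _; have [[hu _] [_ hv]] := h i; rewrite hv // scaler0.
Qed.

End Br.

Lemma zm1 (V : zmodType) (a1 a2 a3 a4 b1 b4 : V) :
  a1 + a2 + (a3 + a4) - (b1 + a3 + (a2 + b4)) = a1 - b1 + (a4 - b4).
Proof.
rewrite !opprD !addrA; rewrite [a1 + a2 + a3 + a4 - b1]addrAC.
rewrite -[a1 + a2 + a3 - b1 + a4 - a3]addrA [a4 - a3]addrC !addrA.
rewrite [a1 + a2 + a3 - b1 - a3]addrAC.
rewrite -[a1 + a2 + a3 - a3]addrA subrr addr0.
rewrite [a1 + a2 - b1 + a4 - a2]addrAC [a1 + a2 - b1 - a2]addrAC.
by rewrite -[a1 + a2 - a2]addrA subrr addr0.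
Qed.

Section Main.
Variables (F : fieldType) (L : lmodType F) (br : L -> L -> L).
Hypotheses (hb : bilinear_bracket br) (hl : right_leibniz_identity br) (hsp : semiprime br).
Implicit Types (P I J K N M : L -> Prop).

Lemma ess_ideal I : essential br I -> is_ideal br I. Proof. by case. Qed.
Lemma ess_sub I : essential br I -> is_subspace I. Proof. by case; case. Qed.
Lemma id_sub I : is_ideal br I -> is_subspace I. Proof. by case. Qed.

Lemma brNl x y : br (- x) y = - br x y.
Proof. by rewrite -scaleN1r (brZl hb) scaleN1r. Qed.
Lemma brNr x y : br y (- x) = - br y x.
Proof. by rewrite -scaleN1r (brZr hb) scaleN1r. Qed.

Lemma pder_0 : is_pder br (fun _ => True) (fun _ => 0 : L).
Proof. by split=> *; rewrite ?scaler0 ?addr0 ?(br0l hb) ?(br0r hb) ?addr0. Qed.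

Lemma pder_add I J d m : is_ideal br I -> is_ideal br J -> is_pder br I d -> is_pder br J m ->
  is_pder br (cap I J) (fun x => d x + m x).
Proof.
move=> hI hJ [d1 d2] [m1 m2]; split.
  by move=> a x y [? ?] [? ?]; rewrite d1 // m1 // scalerDr addrACA.
by move=> x y [? ?] [? ?]; rewrite d2 // m2 // (brDl hb) (brDr hb) addrACA.
Qed.

Lemma pder_scl I d a : is_subspace I -> is_pder br I d -> is_pder br I (fun y => d (a *: y)).
Proof.
move=> hI [d1 d2]; split.
  move=> b x y hx hy.
  rewrite scalerDr scalerA mulrC -scalerA d1 //; by apply: subZ.
move=> x y hx hy.
rewrite -(brZl hb) d2 //; last by apply: subZ.
by rewrite [d (a *: y)](linonZ hI.1 d1) // (brZl hb) (brZr hb).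
Qed.

Lemma pder_neg I d : is_subspace I -> is_pder br I d -> is_pder br I (fun y => - d y).
Proof.
move=> hI [d1 d2]; split.
  by move=> b x y hx hy; rewrite d1 // opprD scalerN.
by move=> x y hx hy; rewrite d2 // opprD brNl brNr.
Qed.

Lemma pder_br I J d m : is_ideal br I -> is_ideal br J -> is_pder br I d -> is_pder br J m ->
  is_pder br (sq br (cap I J)) (fun x => m (d x) - d (m x)).
Proof.
move=> hI hJ hd hm.
have hM := cap_ideal hI hJ.
have hsM := sq_ideal hb hl hM.
have hdM : forall x, sq br (cap I J) x -> cap I J (d x).
  by apply: der_sq (id_sub hI) hd hM _ => x [].
have hmM : forall x, sq br (cap I J) x -> cap I J (m x).
  by apply: der_sq (id_sub hJ) hm hM _ => x [].
have hin : forall x, sq br (cap I J) x -> cap I J x by apply: sq_le.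
have [d1 d2] := hd; have [m1 m2] := hm.
split.
  move=> a x y hx hy.
  have [hxI hxJ] := hin x hx; have [hyI hyJ] := hin y hy.
  have [dxI dxJ] := hdM x hx; have [dyI dyJ] := hdM y hy.
  have [mxI mxJ] := hmM x hx; have [myI myJ] := hmM y hy.
  rewrite d1 // m1 // m1 // d1 //.
  by rewrite scalerBr opprD addrACA.
move=> x y hx hy.
have [hxI hxJ] := hin x hx; have [hyI hyJ] := hin y hy.
have [dxI dxJ] := hdM x hx; have [dyI dyJ] := hdM y hy.
have [mxI mxJ] := hmM x hx; have [myI myJ] := hmM y hy.
have [_ lI rI] := hI; have [_ lJ rJ] := hJ.
rewrite d2 // m2 //.
rewrite (linonD m1) ?m2 //; try by [apply: rJ | apply: lJ].
rewrite (linonD d1) ?d2 //; try by [apply: rI | apply: lI].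
by rewrite (brBl hb) (brBr hb) zm1.
Qed.

End Main.

Lemma zm2 (V : zmodType) (A B C D E G : V) :
  (A - B) - (C - D) = ((A - E) - (G - D)) + - ((B - G) - (E - C)).
Proof.
rewrite !opprB !addrA ?opprB ?addrA.
rewrite [A - E + D]addrAC [A + D - E - G]addrAC subrK.
rewrite [A + D - G - C]addrAC subrK.
by rewrite [A - B + D]addrAC [A + D - B - C]addrAC.
Qed.

Section Main2.
Variables (F : fieldType) (L : lmodType F) (br : L -> L -> L).
Hypotheses (hb : bilinear_bracket br) (hl : right_leibniz_identity br) (hsp : semiprime br).
Implicit Types (P I J K N M : L -> Prop).

Lemma L_equiv : equivalence_on (inD br) (Dequiv br).
Proof.
split.
- by move=> [d I] [eI pI]; exists I.
- move=> q r _ _ [K [eK [s e]]]; exists K; split => //; split => x hx.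
    by have [] := s x hx.
  by rewrite e.
- move=> q r s _ _ _ [K1 [e1 [s1 q1]]] [K2 [e2 [s2 q2]]].
  exists (cap K1 K2); split; first exact: cap_ess.
  split => x [h1 h2]; first by have [] := s1 x h1; have [] := s2 x h2.
  by rewrite q1 // q2.
Qed.

Lemma L_closed : closed_ops (inD br) (Dzero L) (@Dadd F L) (@Dscale F L) (@Dbr F L br).
Proof.
split.
- by split; [exact: ess_T | exact: pder_0].
- move=> [d I] [m J] [eI pI] [eJ pJ]; split; first exact: cap_ess.
  exact: pder_add (ess_ideal eI) (ess_ideal eJ) pI pJ.
- move=> a [d I] [eI pI]; split => //; exact: pder_scl (ess_sub eI) pI.
- move=> [d I] [m J] [eI pI] [eJ pJ]; split.
    by apply: sq_ess => //; exact: cap_ess.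
  exact: pder_br (ess_ideal eI) (ess_ideal eJ) pI pJ.
Qed.

Lemma L_compat : compatible_ops (inD br) (Dequiv br) (@Dadd F L) (@Dscale F L) (@Dbr F L br).
Proof.
split.
- move=> [d I] [d' I'] [m J] [m' J'] _ _ _ _ [K1 [e1 [s1 q1]]] [K2 [e2 [s2 q2]]].
  simpl in *.
  exists (cap K1 K2); split; first exact: cap_ess.
  split => x [h1 h2] /=.
    by have [? ?] := s1 x h1; have [? ?] := s2 x h2.
  by rewrite q1 // q2.
- move=> a [d I] [d' I'] _ _ [K [e [s q]]]; simpl in *; exists K; split => //; split => //= x hx.
  have hs := ess_sub e; by apply: q; apply: subZ.
- move=> [d I] [d' I'] [m J] [m' J'] [eI pI] [eI' pI'] [eJ pJ] [eJ' pJ']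
    [K1 [e1 [s1 q1]]] [K2 [e2 [s2 q2]]].
  simpl in *.
  have eN := cap_ess e1 e2; have hN := ess_ideal eN.
  exists (sq br (cap K1 K2)); split; first exact: sq_ess.
  split => x hx /=.
    split; apply: sq_mono hx => y [h1 h2].
      by have [? _] := s1 y h1; have [? _] := s2 y h2.
    by have [_ ?] := s1 y h1; have [_ ?] := s2 y h2.
  have [hx1 hx2] := sq_le hN hx.
  have hNI : forall y, cap K1 K2 y -> I y := fun y h => (s1 y h.1).1.
  have hNJ : forall y, cap K1 K2 y -> J y := fun y h => (s2 y h.2).1.
  have [hd1 hd2] := der_sq (ess_sub eI) pI hN hNI hx.
  have [hm1 hm2] := der_sq (ess_sub eJ) pJ hN hNJ hx.
  by rewrite -(q1 x) // -(q2 x) // -(q1 (m x)) // -(q2 (d x)).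
Qed.

Lemma L_vs : vector_space_axioms (inD br) (Dequiv br) (Dzero L) (@Dadd F L) (@Dscale F L).
Proof.
split; split.
- move=> [d I] [m J] [n K] [eI pI] [eJ pJ] [eK pK].
  exists (cap I (cap J K)); split; first by apply: cap_ess => //; apply: cap_ess.
  split => x [h1 [h2 h3]] /=; first by do !split.
  by rewrite addrA.
- move=> [d I] [m J] [eI pI] [eJ pJ].
  exists (cap I J); split; first exact: cap_ess.
  split => x [h1 h2] /=; first by do !split.
  by rewrite addrC.
- move=> [d I] [eI pI]; exists I; split => //; split => x hx /=; first by do !split.
  by rewrite add0r.
- move=> [d I] [eI pI]; exists (fun y => - d y, I); split.
    by split; [exact: eI | apply: pder_neg => //; exact: ess_sub eI].
  exists I; split => //; split => x hx /=; first by do !split.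
  by rewrite subrr.
- move=> a b [d I] [eI pI]; exists I; split => //; split => x hx //=.
  by rewrite scalerA mulrC.
- move=> [d I] [eI pI]; exists I; split => //; split => x hx //=.
  by rewrite scale1r.
- move=> a [d I] [m J] [eI pI] [eJ pJ]; exists (cap I J); split; first exact: cap_ess.
  by split => x hx //=.
- move=> a b [d I] [eI pI]; simpl in *; exists I; split => //; split => x hx /=; first by do !split.
  have hs := ess_sub eI.
  by rewrite scalerDl (linonD pI.1) //; apply: subZ.
Qed.

End Main2.

Section Main3.
Variables (F : fieldType) (L : lmodType F) (br : L -> L -> L).
Hypotheses (hb : bilinear_bracket br) (hl : right_leibniz_identity br) (hsp : semiprime br).
Implicit Types (P I J K N M : L -> Prop).

Lemma L_brax : bracket_axioms (inD br) (Dequiv br) (@Dadd F L) (@Dscale F L) (@Dbr F L br).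
Proof.
split.
- move=> a [d I] [m J] [n K] [eI pI] [eJ pJ] [eK pK]; simpl in *.
  have eM : essential br (cap (cap I J) K) by apply: cap_ess => //; apply: cap_ess.
  have hM := ess_ideal eM.
  have hMI : forall y, cap (cap I J) K y -> I y by move=> y [[]].
  have hMJ : forall y, cap (cap I J) K y -> J y by move=> y [[]].
  have hMK : forall y, cap (cap I J) K y -> K y by move=> y [[]].
  exists (sq br (cap (cap I J) K)); split; first exact: sq_ess.
  split => x hx /=.
    split => //; split; apply: sq_mono hx => y [[]] //.
  have hsq := sq_subspace br (cap (cap I J) K).
  have hax : sq br (cap (cap I J) K) (a *: x) by apply: subZ.
  have [[xI xJ] xK] := sq_le hM hx.
  have [[dI dJ] dK] := der_sq (ess_sub eI) pI hM hMI hax.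
  have [[mI mJ] mK] := der_sq (ess_sub eJ) pJ hM hMJ hx.
  have [[nI nJ] nK] := der_sq (ess_sub eK) pK hM hMK hx.
  rewrite (linonD pK.1) // (linonZ (ess_sub eK).1 pK.1) //.
  by rewrite opprD addrACA.
- move=> a [d I] [m J] [n K] [eI pI] [eJ pJ] [eK pK]; simpl in *.
  have eM : essential br (cap K (cap I J)) by apply: cap_ess => //; apply: cap_ess.
  have hM := ess_ideal eM.
  have hMI : forall y, cap K (cap I J) y -> I y by move=> y [? []].
  have hMJ : forall y, cap K (cap I J) y -> J y by move=> y [? []].
  have hMK : forall y, cap K (cap I J) y -> K y by move=> y [? []].
  exists (sq br (cap K (cap I J))); split; first exact: sq_ess.
  split => x hx /=.
    split => //; split; apply: sq_mono hx => y [? []] //.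
  have hsq := sq_subspace br (cap K (cap I J)).
  have hax : sq br (cap K (cap I J)) (a *: x) by apply: subZ.
  have [xK [xI xJ]] := sq_le hM hx.
  have [dK [dI dJ]] := der_sq (ess_sub eI) pI hM hMI hax.
  have [mK [mI mJ]] := der_sq (ess_sub eJ) pJ hM hMJ hx.
  have [nK [nI nJ]] := der_sq (ess_sub eK) pK hM hMK hx.
  rewrite (linonD pK.1) // (linonZ (ess_sub eK).1 pK.1) //.
  by rewrite opprD addrACA.
- move=> [d I] [m J] [n K] [eI pI] [eJ pJ] [eK pK]; simpl in *.
  have eM : essential br (cap (cap I J) K) by apply: cap_ess => //; apply: cap_ess.
  have hM := ess_ideal eM.
  have eS := sq_ess hb hl hsp eM.
  have hS := ess_ideal eS.
  have hMI : forall y, cap (cap I J) K y -> I y by move=> y [[]].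
  have hMJ : forall y, cap (cap I J) K y -> J y by move=> y [[]].
  have hMK : forall y, cap (cap I J) K y -> K y by move=> y [[]].
  have hSM := sq_le hM.
  have hSI : forall y, sq br (cap (cap I J) K) y -> I y by move=> y /hSM /hMI.
  have hSJ : forall y, sq br (cap (cap I J) K) y -> J y by move=> y /hSM /hMJ.
  have hSK : forall y, sq br (cap (cap I J) K) y -> K y by move=> y /hSM /hMK.
  exists (sq br (sq br (cap (cap I J) K))); split; first exact: sq_ess.
  have hIJ := cap_ideal (ess_ideal eI) (ess_ideal eJ).
  have hIK := cap_ideal (ess_ideal eI) (ess_ideal eK).
  have hJK := cap_ideal (ess_ideal eJ) (ess_ideal eK).
  split => x hx /=.
    split.
      apply: sq_mono hx => y hy; split; first exact: hSI.
      by apply: sq_mono hy => z [[]].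
    split.
      apply: sq_mono hx => y hy; split; last exact: hSK.
      by apply: sq_mono hy => z [[]].
    apply: sq_mono hx => y hy; split; last exact: hSJ.
    by apply: sq_mono hy => z [[]].
  have hx1 := sq_le hS hx.
  have hdx := der_sq (ess_sub eI) pI hS hSI hx.
  have hmx := der_sq (ess_sub eJ) pJ hS hSJ hx.
  have hnx := der_sq (ess_sub eK) pK hS hSK hx.
  have [[dmI dmJ] dmK] := der_sq (ess_sub eI) pI hM hMI hmx.
  have [[dnI dnJ] dnK] := der_sq (ess_sub eI) pI hM hMI hnx.
  have [[mdI mdJ] mdK] := der_sq (ess_sub eJ) pJ hM hMJ hdx.
  have [[mnI mnJ] mnK] := der_sq (ess_sub eJ) pJ hM hMJ hnx.
  have [[ndI ndJ] ndK] := der_sq (ess_sub eK) pK hM hMK hdx.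
  have [[nmI nmJ] nmK] := der_sq (ess_sub eK) pK hM hMK hmx.
  have pqs := pder_br hb hl (ess_ideal eI) (ess_ideal eK) pI pK.
  have pqsr := pder_br hb hl (sq_ideal hb hl hIK) (ess_ideal eJ) pqs pJ.
  have hx2 : sq br (cap (sq br (cap I K)) J) x.
    apply: sq_mono hx => y hy; split; last exact: hSJ.
    by apply: sq_mono hy => z [[]].
  have hsub2 := id_sub (sq_ideal hb hl (cap_ideal (sq_ideal hb hl hIK) (ess_ideal eJ))).
  rewrite (linonZ hsub2.1 pqsr.1) // scaleN1r.
  rewrite (linonB (ess_sub eI) pI.1) //.
  rewrite (linonB (ess_sub eK) pK.1) //.
  rewrite (linonB (ess_sub eJ) pJ.1) //.
  exact: zm2.
Qed.

Lemma L_mono : quotient_monomorphism (inD br) (Dequiv br) (@Dadd F L) (@Dscale F L)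
    (@Dbr F L br) br (phi br).
Proof.
split.
- move=> x; split; first exact: ess_T.
  rewrite /phi /Rmul /=.
  split; first by move=> a y z _ _; rewrite hb.1.
  by move=> y z _ _; rewrite (hl y z x) addrC subrK.
- move=> a x y; exists (fun _ => True); split; first exact: ess_T.
  split => // z _ /=; rewrite /Rmul hb.2 (brZl hb) //.
- move=> x y; exists (sq br (cap (fun _ => True) (fun _ => True))); split.
    by apply: sq_ess => //; apply: cap_ess; exact: ess_T.
  split => // z _ /=; rewrite /Rmul hl //.
- move=> x y [K [eK [_ q]]]; simpl in *.
  apply/eqP; rewrite -subr_eq0; apply/eqP; apply: (ann hb hl (K := K)) => // z hz.
  by rewrite (brBr hb) /Rmul; have := q z hz; rewrite /Rmul => ->; rewrite subrr.
Qed.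

End Main3.

Theorem theorem4p4 (F : fieldType) (L : lmodType F) (br : L -> L -> L)
  (hL : right_leibniz_algebra br) (hsp : semiprime br) :
  quotient_right_leibniz_algebra (inD br) (Dequiv br) (Dzero L)
    (@Dadd F L) (@Dscale F L) (@Dbr F L br) /\
  quotient_monomorphism (inD br) (Dequiv br) (@Dadd F L) (@Dscale F L)
    (@Dbr F L br) br (phi br).
Proof.
have [hb hl] := hL.
split; last exact: L_mono.
split; [exact: L_equiv | exact: L_closed | exact: L_compat | exact: L_vs | exact: L_brax].
Qed.
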